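(* Let $\varphi,\mu\in\mathcal{M}$. Then $\varphi\mu=\mu\varphi$ if and only if there exists $\nu\in G_M$ with $|\nu|\le 2$ such that $\mu=\nu\varphi\nu^{-1}$.
   Context: Fix $n\ge 2$, $W=\{1,\dots,n\}$, $M=\{n+1,\dots,2n\}$, $I=W\cup M$. Permutations compose right-to-left. A matching is a permutation $\mu$ of $I$ with $\mu(W)=M$, $\mu(M)=W$ and $\mu(\mu(z))=z$ for all $z\in I$; $\mathcal{M}$ is the set of matchings. $G_M=\{\nu\in\mathrm{Sym}(I):\nu(x)=x\text{ for all }x\in W\}$. $|\nu|$ denotes the order of the permutation $\nu$. *)

(* Defs.v *)
From mathcomp Require Import all_boot all_fingroup.
Set Implicit Arguments. Unset Strict Implicit. Unset Printing Implicit Defensive.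

(* Index set I = {1,...,2n} is represented by 'I_(n + n) = {0,...,2n-1};
   W = {1..n} becomes {0..n-1} and M = {n+1..2n} becomes {n..2n-1}. *)
Definition Wset (n : nat) : {set 'I_(n + n)} := [set i : 'I_(n + n) | i < n].
Definition Mset (n : nat) : {set 'I_(n + n)} := [set i : 'I_(n + n) | n <= i].

(* Composition right-to-left: (rcomp s t) x = s (t x).
   (mathcomp's group product on {perm _} composes left-to-right.) *)
Definition rcomp (T : finType) (s t : {perm T}) : {perm T} := (t * s)%g.

Lemma rcompE (T : finType) (s t : {perm T}) x : rcomp s t x = s (t x).
Proof. by rewrite /rcomp permM. Qed.

Definition is_matching (n : nat) (mu : {perm 'I_(n + n)}) : Prop :=
  [/\ mu @: Wset n = Mset n, mu @: Mset n = Wset n & forall z, mu (mu z) = z].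

Definition in_GM (n : nat) (nu : {perm 'I_(n + n)}) : Prop :=
  forall x, x \in Wset n -> nu x = x.

(* Main.v *)
Require Import Defs.
From mathcomp Require Import all_boot all_fingroup.
From mathcomp Require Import cyclic.

Lemma matchWM n (p : {perm 'I_(n + n)}) : is_matching p ->
  forall x, (p x < n) = ~~ (x < n).
Proof.
case=> hW hM _ x; case: (ltnP x n) => hx.
  have : p x \in Mset n by rewrite -hW; apply: imset_f; rewrite inE.
  by rewrite inE leqNgt => /negbTE.
have : p x \in Wset n by rewrite -hM; apply: imset_f; rewrite inE.
by rewrite inE.
Qed.

Arguments matchWM {n p}.

Theorem proposition19 (n : nat) (hn : 2 <= n) (phi mu : {perm 'I_(n + n)}) :
  is_matching phi -> is_matching mu ->
  (rcomp phi mu = rcomp mu phi <->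
   exists nu : {perm 'I_(n + n)},
     [/\ in_GM nu, (#[nu]%g <= 2)%N & mu = rcomp (rcomp nu phi) (nu^-1)%g]).
Proof.
move=> Hphi Hmu.
have phiI := let: And3 _ _ h := Hphi in h.
have muI := let: And3 _ _ h := Hmu in h.
split.
- move/permP => hc.
  have c z : phi (mu z) = mu (phi z) by have := hc z; rewrite !rcompE.
  pose f (x : 'I_(n + n)) := if x < n then x else mu (phi x).
  have finj : injective f.
    move=> x y; rewrite /f; case hx: (x < n); case hy: (y < n) => // E.
    + have := matchWM Hmu (phi y); rewrite -E (matchWM Hphi) hx hy //.
    + have := matchWM Hmu (phi x); rewrite E (matchWM Hphi) hx hy //.
    + by apply: (perm_inj (s:=phi)); apply: (perm_inj (s:=mu)).
  pose nu := perm finj.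
  have nn x : nu (nu x) = x.
    rewrite !permE /f; case hx: (x < n); rewrite ?hx //.
    by rewrite (matchWM Hmu) (matchWM Hphi) hx /= -c muI phiI.
  have h2 : (nu ^+ 2 = 1)%g.
    by apply/permP => x; rewrite expgS expg1 permM perm1 nn.
  exists nu; split.
  + by move=> x; rewrite inE permE /f => ->.
  + by apply: dvdn_leq => //; rewrite order_dvdn h2 eqxx.
  + apply/permP => x; rewrite !rcompE.
    have -> : (nu^-1)%g x = nu x by rewrite -{2}(permKV nu x) nn.
    rewrite !permE /f; case hx: (x < n) => /=.
      by rewrite (matchWM Hphi) hx /= phiI.
    by rewrite (matchWM Hphi) (matchWM Hmu) (matchWM Hphi) hx /= c phiI.
- case=> nu [nuW hord E].
  have h2 : (nu ^+ 2 = 1)%g.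
    apply/eqP; rewrite -order_dvdn.
    have := order_gt0 nu.
    by case: #[nu]%g hord => [|[|[|k]]].
  have nn x : nu (nu x) = x.
    by rewrite -permM -{2}(expg1 nu) -expgS h2 perm1.
  have nuV x : (nu^-1)%g x = nu x by rewrite -{2}(permKV nu x) nn.
  have nuWx (x : 'I_(n + n)) : x < n -> nu x = x by move=> h; apply: nuW; rewrite inE.
  have nuM (x : 'I_(n + n)) : (nu x < n) = (x < n).
    case hx: (x < n); first by rewrite nuWx.
    apply/negbTE/negP => h.
    have := nuWx _ h; rewrite nn => h'.
    by move: hx; rewrite h' h.
  have muE z : mu z = nu (phi (nu z)) by rewrite E !rcompE nuV.
  apply/permP => x; rewrite !rcompE !muE.
  case hx: (x < n).
    rewrite (nuWx x hx) [nu (phi (nu (phi x)))]nuWx //.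
    by rewrite (matchWM Hphi) nuM (matchWM Hphi) hx.
  rewrite [nu (phi x)]nuWx; last by rewrite (matchWM Hphi) hx.
  rewrite phiI [nu (phi (nu x))]nuWx ?phiI //.
  by rewrite (matchWM Hphi) nuM hx.
Qed.
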